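(* Let $R$ be a ring and $M$ a left $R$-module. Then $\mathcal N_s(M)\subseteq\langle E_M(0)\rangle\subseteq\beta_{co}(M)$.
   Context: Rings are associative with identity; modules are unital left modules. $\mathcal N_s(M)$ is the set of strongly nilpotent elements of $M$: $m$ is strongly nilpotent if $m=\sum_{i=1}^r a_im_i$ for some $a_i\in R$, $m_i\in M$, $r\in\mathbb N$ such that for every $i$ and every sequence $a_{i1},a_{i2},\dots$ with $a_{i1}=a_i$ and $a_{i,n+1}\in a_{in}Ra_{in}$ for all $n$, there is $k$ with $a_{ik}Rm_i=0$. $E_M(0)=\{rm: r\in R,m\in M, r^km=0\text{ for some }k\in\mathbb N\}$, $\langle E_M(0)\rangle$ the submodule generated. A submodule $P$ is completely prime if $RM\not\subseteq P$ and $rm\in P$ implies $m\in P$ or $rM\subseteq P$; $\beta_{co}(M)$ is the intersection of all completely prime submodules ($=M$ if none). *)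

(* Defs.v *)
From HB Require Import structures.
From mathcomp Require Import all_boot all_order all_algebra.
Set Implicit Arguments. Unset Strict Implicit. Unset Printing Implicit Defensive.
Import GRing.Theory.
Local Open Scope ring_scope.

Definition is_submodule (R : pzRingType) (M : lmodType R) (P : M -> Prop) : Prop :=
  [/\ P 0, (forall x y, P x -> P y -> P (x + y)) & (forall (r : R) x, P x -> P (r *: x))].

Definition gen_submod (R : pzRingType) (M : lmodType R) (S : M -> Prop) : M -> Prop :=
  fun x => forall P, is_submodule P -> (forall y, S y -> P y) -> P x.

Definition strongly_nilpotent (R : pzRingType) (M : lmodType R) (m : M) : Prop :=
  exists (r : nat) (a : 'I_r -> R) (mm : 'I_r -> M),
    m = \sum_(i < r) a i *: mm i /\
    forall (i : 'I_r) (s : nat -> R),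
      s 0%N = a i ->
      (forall n, exists x : R, s n.+1 = s n * x * s n) ->
      exists k : nat, forall x : R, (s k * x) *: mm i = 0.

Definition Ns (R : pzRingType) (M : lmodType R) : M -> Prop :=
  fun m => strongly_nilpotent m.

Definition EM0 (R : pzRingType) (M : lmodType R) : M -> Prop :=
  fun v => exists (r : R) (m : M) (k : nat), v = r *: m /\ r ^+ k *: m = 0.

Definition completely_prime (R : pzRingType) (M : lmodType R) (P : M -> Prop) : Prop :=
  [/\ is_submodule P,
      (exists (r : R) (m : M), ~ P (r *: m))          (* RM is not contained in P *)
    & (forall (r : R) (m : M), P (r *: m) -> P m \/ (forall m' : M, P (r *: m')))].

(* beta_co(M): intersection of all completely prime submodules (= M if none) *)
Definition beta_co (R : pzRingType) (M : lmodType R) : M -> Prop :=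
  fun x => forall P, completely_prime P -> P x.

(* Main.v *)
Require Import Defs.
From mathcomp Require Import all_boot all_order all_algebra.
Import GRing.Theory.
Local Open Scope ring_scope.

Lemma gen_sum (R : pzRingType) (M : lmodType R) (S : M -> Prop) n (f : 'I_n -> M) :
  (forall i, S (f i)) -> gen_submod S (\sum_(i < n) f i).
Proof.
move=> H P [P0 PD PZ] HS.
elim/big_ind: _ => //; by move=> i _; apply: HS.
Qed.

Lemma cp_em0 (R : pzRingType) (M : lmodType R) (P : M -> Prop) :
  completely_prime P -> forall v, EM0 v -> P v.
Proof.
move=> [[P0 PD PZ] _ CP] v [r [m [k [-> Hk]]]].
have key : forall j, P (r ^+ j.+1 *: m) -> P (r *: m).
  elim=> [|j IH]; first by rewrite expr1.
  rewrite exprS -scalerA => /CP [/IH //|H]; exact: H.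
case: k Hk => [|k] Hk.
  by rewrite expr0 scale1r in Hk; rewrite Hk scaler0.
by apply: (key k); rewrite Hk.
Qed.

Theorem lemma4p9 (R : pzRingType) (M : lmodType R) :
  (forall m : M, Ns m -> gen_submod (@EM0 R M) m) /\
  (forall m : M, gen_submod (@EM0 R M) m -> beta_co m).
Proof.
split.
  move=> m [r [a [mm [-> H]]]].
  apply: gen_sum => i.
  have Hs : forall n, exists x : R, a i ^+ (2 ^ n.+1) = a i ^+ (2 ^ n) * x * a i ^+ (2 ^ n).
    by move=> n; exists 1; rewrite mulr1 -exprD expnS mul2n -addnn.
  have [k Hk] := H i (fun n => a i ^+ (2 ^ n)) (expr1 _) Hs.
  exists (a i), (mm i), (2 ^ k)%N; split => //.
  by have := Hk 1; rewrite mulr1.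
move=> m Hm P HP.
have [HPs _ _] := HP.
apply: Hm => //; exact: cp_em0.
Qed.
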